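(* Let $\mathcal A$ (analysis units, $|\mathcal A|=n_a$) and $\mathcal R$ (randomization units, $|\mathcal R|=n_r$) be finite sets, let $\mathbf T=(T_r)_{r\in\mathcal R}$ be the random treatment vector, and let $E_{ar}:\{0,1\}^{n_r}\to\{0,1\}$, $e_{ar}=E_{ar}(\mathbf T)$, $w_{ar}$, $\alpha_a,\beta_a$, $x_a$, $y_a$, $\mu$, $\mathcal W_a(\mathbf 1)$, $z^u_a$, $\hat\beta^u_a$, $\widehat{\mathcal W_a(\mathbf 1)}^c$ be as in the context. Suppose $G\subset\mathcal A\times\mathcal R$ is a known anchor subgraph. Assume: (a) edges are $r$-driven; (b) the treatment assignments $T_r$, $r\in\mathcal R$, are independent Bernoulli random variables with success probability $p\in(0,1)$; (c) $\{(a,r)\mid u_{ar}\neq 0\}\subset G$; (d) $c_{ar}=\mathbb I((a,r)\in G)$ for all $(a,r)$; (e) $w_{ar}\neq 0$ for all $(a,r)\in G$; and (f) $|\{r\mid u_{ar}\neq 0\}|>0$ for all $a\in\mathcal A$. Then $$\hat\mu^{u,c}=\frac1{n_a}\sum_{a\in\mathcal A}\hat\beta^u_a\cdot\widehat{\mathcal W_a(\mathbf 1)}^c$$ is an unbiased estimator of the total treatment effect $\mu$, i.e.\ $\mathbb E[\hat\mu^{u,c}]=\mu$.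
   Context: Setting (endogenous bipartite interference graph). $\mathcal A$ is a set of $n_a$ analysis units, $\mathcal R$ a set of $n_r$ randomization units. A random treatment vector $\mathbf T=(T_r)_{r\in\mathcal R}\in\{0,1\}^{n_r}$ is assigned; all randomness comes from $\mathbf T$. For each $(a,r)\in\mathcal A\times\mathcal R$ there is an (unknown) edge potential outcome function $E_{ar}:\{0,1\}^{n_r}\to\{0,1\}$; its realization $e_{ar}=E_{ar}(\mathbf T)$ is observed. Edges are called $r$-driven if for every $(a,r)$, $E_{ar}(\mathbf T)$ depends on $\mathbf T$ only through $T_r$; then $e_{ar}(1)$ denotes the value of $E_{ar}$ when $T_r=1$ (so $e_{ar}(1)=E_{ar}(\mathbf 1)$). An anchor subgraph is a set $G\subset\mathcal A\times\mathcal R$ such that $E_{ar}(\mathbf T)=1$ for every $\mathbf T\in\{0,1\}^{n_r}$ and every $(a,r)\in G$. Outcome model: given known real weights $w_{ar}$, the potential outcome of analysis unit $a$ is $Y_a(\mathbf T)=\alpha_a+\beta_a x_a$ where $x_a=\sum_r T_r E_{ar}(\mathbf T)w_{ar}$ and $\alpha_a,\beta_a$ are unknown fixed constants; the realized outcome is $y_a=Y_a(\mathbf T)$. The total treatment effect (TTE) is $\mu=\frac1{n_a}\sum_a[Y_a(\mathbf 1)-Y_a(\mathbf 0)]=\frac1{n_a}\sum_a\mathcal W_a(\mathbf 1)\beta_a$, where $\mathcal W_a(\mathbf 1)=\sum_r w_{ar}E_{ar}(\mathbf 1)$ and $\mathbf 1,\mathbf 0$ are the all-treated and all-control vectors. Estimators: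 for fixed researcher-chosen real weights $u_{ar}$ and $c_{ar}$, let $z^u_a=\sum_r T_r u_{ar}$, $\hat\beta^u_a=y_a\,(z^u_a-\mathbb E z^u_a)/\mathrm{Cov}(x_a,z^u_a)$, and $\widehat{\mathcal W_a(\mathbf 1)}^c=\sum_r\left[\frac{T_r w_{ar}(e_{ar}-c_{ar})}{p}+w_{ar}c_{ar}\right]$, where $p$ is the treatment probability.
   Formalization: The covariance $\mathrm{Cov}(x_a,z^u_a)$ in the denominator of $\hat\beta^u_a$ is assumed nonzero for every a ∈ 𝒜, as a hypothesis beyond (a)–(f). The statement above fails without it. *)

(* Defs.v *)
From HB Require Import structures.
From mathcomp Require Import all_boot all_order all_algebra.
Set Implicit Arguments. Unset Strict Implicit. Unset Printing Implicit Defensive.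
Import Order.TTheory GRing.Theory Num.Theory.
Local Open Scope ring_scope.

Section Defs.
Variables (K : realFieldType) (A Rr : finType).

Definition treat := {ffun Rr -> bool}.

Definition edge_fun := A -> Rr -> treat -> bool.

Definition all1 : treat := [ffun => true].
Definition all0 : treat := [ffun => false].

Definition r_driven (E : edge_fun) : Prop :=
  forall a r (t t' : treat), t r = t' r -> E a r t = E a r t'.

Definition anchor (E : edge_fun) (G : {set A * Rr}) : Prop :=
  forall a r (t : treat), (a, r) \in G -> E a r t = true.

Definition bern_prob (p : K) (t : treat) : K :=
  \prod_(r : Rr) (if t r then p else 1 - p).

Definition Ex (p : K) (f : treat -> K) : K :=
  \sum_(t : treat) bern_prob p t * f t.

Definition Cov (p : K) (f g : treat -> K) : K :=
  Ex p (fun t => f t * g t) - Ex p f * Ex p g.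

Definition exposure (E : edge_fun) (w : A -> Rr -> K) (a : A) (t : treat) : K :=
  \sum_(r : Rr) (t r)%:R * (E a r t)%:R * w a r.

Definition Y (E : edge_fun) (w : A -> Rr -> K) (alpha beta : A -> K)
  (a : A) (t : treat) : K :=
  alpha a + beta a * exposure E w a t.

Definition TTE (E : edge_fun) (w : A -> Rr -> K) (alpha beta : A -> K) : K :=
  (#|A|%:R)^-1 * \sum_(a : A) (Y E w alpha beta a all1 - Y E w alpha beta a all0).

Definition W1 (E : edge_fun) (w : A -> Rr -> K) (a : A) : K :=
  \sum_(r : Rr) w a r * (E a r all1)%:R.

Definition zu (u : A -> Rr -> K) (a : A) (t : treat) : K :=
  \sum_(r : Rr) (t r)%:R * u a r.

Definition beta_hat (p : K) (E : edge_fun) (w : A -> Rr -> K) (alpha beta : A -> K)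
  (u : A -> Rr -> K) (a : A) (t : treat) : K :=
  Y E w alpha beta a t * (zu u a t - Ex p (zu u a))
    / Cov p (exposure E w a) (zu u a).

Definition W1_hat (p : K) (E : edge_fun) (w : A -> Rr -> K) (c : A -> Rr -> K)
  (a : A) (t : treat) : K :=
  \sum_(r : Rr) ((t r)%:R * w a r * ((E a r t)%:R - c a r) / p + w a r * c a r).

Definition mu_hat (p : K) (E : edge_fun) (w : A -> Rr -> K) (alpha beta : A -> K)
  (u c : A -> Rr -> K) (t : treat) : K :=
  (#|A|%:R)^-1 * \sum_(a : A) beta_hat p E w alpha beta u a t * W1_hat p E w c a t.

End Defs.

(* Main.v *)
Require Import Defs.
From HB Require Import structures.
From mathcomp Require Import all_boot all_order all_algebra.
From mathcomp Require Import ring lra.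
Import Order.TTheory GRing.Theory Num.Theory.
Set Implicit Arguments. Unset Strict Implicit. Unset Printing Implicit Defensive.
Local Open Scope ring_scope.

Lemma Ex_ext (K : realFieldType) (Rr : finType) (p : K) (f g : treat Rr -> K) :
  f =1 g -> Ex p f = Ex p g.
Proof. by move=> fg; apply: eq_bigr => t _; rewrite fg. Qed.

Lemma ExD (K : realFieldType) (Rr : finType) (p : K) (f g : treat Rr -> K) :
  Ex p (fun t => f t + g t) = Ex p f + Ex p g.
Proof. by rewrite /Ex -big_split; apply: eq_bigr => t _; rewrite mulrDr. Qed.

Lemma ExZ (K : realFieldType) (Rr : finType) (p : K) (c : K) (f : treat Rr -> K) :
  Ex p (fun t => c * f t) = c * Ex p f.
Proof. by rewrite /Ex mulr_sumr; apply: eq_bigr => t _; rewrite mulrCA. Qed.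

Lemma Ex_sum (K : realFieldType) (Rr I : finType) (p : K) (F : I -> treat Rr -> K) :
  Ex p (fun t => \sum_(i : I) F i t) = \sum_(i : I) Ex p (F i).
Proof.
rewrite /Ex (exchange_big) /=; apply: eq_bigr => t _; by rewrite mulr_sumr.
Qed.

Lemma Ex1 (K : realFieldType) (Rr : finType) (p : K) :
  Ex p (fun _ : treat Rr => 1) = 1.
Proof.
rewrite /Ex /bern_prob.
under eq_bigr do rewrite mulr1.
rewrite -(bigA_distr_bigA (fun (r : Rr) (b : bool) => if b then p else 1 - p)) /=.
rewrite big1 // => r _; rewrite big_bool /=; ring.
Qed.

Lemma Exc (K : realFieldType) (Rr : finType) (p : K) (c : K) :
  Ex p (fun _ : treat Rr => c) = c.
Proof.
rewrite (@Ex_ext _ _ p _ (fun _ => c * 1)); last by move=> t; rewrite mulr1.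
by rewrite ExZ Ex1 mulr1.
Qed.

Definition upd (Rr : finType) (t : treat Rr) (s : Rr) (b : bool) : treat Rr :=
  [ffun q => if q == s then b else t q].

Definition indep (K : realFieldType) (Rr : finType) (s : Rr) (h : treat Rr -> K) :=
  forall t b, h (upd t s b) = h t.

Lemma upd_s (Rr : finType) (t : treat Rr) s b : upd t s b s = b.
Proof. by rewrite /upd ffunE eqxx. Qed.

Lemma upd_q (Rr : finType) (t : treat Rr) s b q : q != s -> upd t s b q = t q.
Proof. by rewrite /upd ffunE => /negbTE ->. Qed.

Lemma core (K : realFieldType) (Rr : finType) (s : Rr) (F : treat Rr -> K)
  (phi : bool -> K) : indep s F ->
  \sum_(t : treat Rr) phi (t s) * F t = (phi true + phi false) * \sum_(t : treat Rr | t s) F t.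
Proof.
move=> hF; rewrite (bigID (fun t : treat Rr => t s)) /= mulrDl !mulr_sumr; congr (_ + _).
  by apply: eq_bigr => t ->.
pose fl := fun t : treat Rr => upd t s (~~ t s).
have flK : involutive fl.
  move=> t; apply/ffunP => q; rewrite /fl; case: (eqVneq q s) => [->|qs].
    by rewrite !upd_s negbK.
  by rewrite !upd_q.
rewrite (reindex_inj (inv_inj flK)) /=.
apply: eq_big => t; first by rewrite /fl upd_s negbK.
by rewrite /fl upd_s negbK => ->; rewrite hF.
Qed.

Lemma Ex_indep (K : realFieldType) (Rr : finType) (p : K) (s : Rr) (g : bool -> K)
  (h : treat Rr -> K) : indep s h ->
  Ex p (fun t => g (t s) * h t) = (p * g true + (1 - p) * g false) * Ex p h.
Proof.
move=> hh.
pose rho := fun b : bool => if b then p else 1 - p.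
pose Q := fun t : treat Rr => \prod_(r | r != s) rho (t r).
have bQ : forall t, bern_prob p t = rho (t s) * Q t.
  by move=> t; rewrite /bern_prob (bigD1 s).
have hQ : indep s (fun t => Q t * h t).
  move=> t b; rewrite hh; congr (_ * _); apply: eq_bigr => r rs.
  by rewrite upd_q.
rewrite /Ex.
rewrite (eq_bigr (fun t : treat Rr => (fun b => g b * rho b) (t s) * (fun t => Q t * h t) t)); last first.
  by move=> t _; rewrite bQ /=; ring.
rewrite [in RHS](eq_bigr (fun t : treat Rr => rho (t s) * (fun t => Q t * h t) t)); last first.
  by move=> t _; rewrite bQ /= mulrA.
rewrite (core (fun b => g b * rho b) hQ) (core rho hQ) /rho /=.
rewrite mulrA; congr (_ * _); ring.
Qed.
Lemma indepM (K : realFieldType) (Rr : finType) (s : Rr) (f g : treat Rr -> K) :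
  indep s f -> indep s g -> indep s (fun t => f t * g t).
Proof. by move=> hf hg t b; rewrite hf hg. Qed.

Lemma indepC (K : realFieldType) (Rr : finType) (s : Rr) (c : K) :
  indep s (fun _ => c).
Proof. by []. Qed.

Lemma indep_sum (K : realFieldType) (Rr I : finType) (s : Rr) (F : I -> treat Rr -> K) :
  (forall i, indep s (F i)) -> indep s (fun t => \sum_(i : I) F i t).
Proof. by move=> hF t b; apply: eq_bigr => i _; rewrite hF. Qed.

Lemma indep_edge (K : realFieldType) (A Rr : finType) (E : edge_fun A Rr)
  (a : A) (s q : Rr) (f : bool -> bool -> K) :
  r_driven E -> q != s -> indep s (fun t => f (t q) (E a q t)).
Proof.
move=> rd qs t b; have e : upd t s b q = t q by rewrite upd_q.
by rewrite e (rd a q (upd t s b) t e).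
Qed.

Lemma te1 (K : realFieldType) (A Rr : finType) (E : edge_fun A Rr) a q (t : treat Rr) :
  r_driven E -> ((t q)%:R * (E a q t)%:R : K) = (t q)%:R * (E a q (all1 Rr))%:R.
Proof.
move=> rd; case e: (t q); last by rewrite !mul0r.
by rewrite (rd a q t (all1 Rr)) // /all1 ffunE.
Qed.

Lemma Ex_g (K : realFieldType) (Rr : finType) (p : K) (s : Rr) (g : bool -> K) :
  Ex p (fun t : treat Rr => g (t s)) = p * g true + (1 - p) * g false.
Proof.
rewrite (@Ex_ext _ _ p _ (fun t => g (t s) * (fun _ => 1) t)); last by move=> t; rewrite mulr1.
by rewrite Ex_indep // Ex1 mulr1.
Qed.

Lemma A1 (K : realFieldType) (Rr : finType) (p : K) (s : Rr) (h : treat Rr -> K) :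
  indep s h -> Ex p (fun t => ((t s)%:R - p) * h t) = 0.
Proof.
move=> hh; rewrite (Ex_indep p (fun b : bool => (b%:R - p)) hh) /=; apply/eqP.
rewrite mulf_eq0; apply/orP; left; apply/eqP; ring.
Qed.

Lemma A2 (K : realFieldType) (Rr : finType) (p : K) (s : Rr) (h : treat Rr -> K) :
  indep s h -> Ex p (fun t => ((t s)%:R - p) * ((t s)%:R * h t)) = p * (1 - p) * Ex p h.
Proof.
move=> hh; rewrite (@Ex_ext _ _ p _ (fun t => (fun b : bool => (b%:R - p) * b%:R) (t s) * h t)).
  by rewrite (Ex_indep p (fun b : bool => (b%:R - p) * b%:R) hh) /=; congr (_ * _); ring.
by move=> t /=; rewrite mulrA.
Qed.

Lemma B (K : realFieldType) (A Rr : finType) (E : edge_fun A Rr) (w : A -> Rr -> K)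
  (a : A) (p : K) (s : Rr) (h : treat Rr -> K) :
  r_driven E -> indep s h ->
  Ex p (fun t => ((t s)%:R - p) * (exposure E w a t * h t)) =
  p * (1 - p) * (w a s * (E a s (all1 Rr))%:R) * Ex p h.
Proof.
move=> rd hh.
rewrite (@Ex_ext _ _ p _ (fun t => \sum_(q : Rr) w a q *
   (((t s)%:R - p) * ((t q)%:R * (E a q t)%:R * h t)))); last first.
  move=> t; rewrite /exposure mulr_suml mulr_sumr; apply: eq_bigr => q _; ring.
rewrite Ex_sum (bigD1 s) //= big1 ?addr0.
  rewrite ExZ (@Ex_ext _ _ p _ (fun t => ((t s)%:R - p) * ((t s)%:R *
     ((fun t => (E a s (all1 Rr))%:R * h t) t)))); last first.
    by move=> t /=; rewrite te1 //; ring.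
  rewrite A2; last by apply: indepM => //; apply: indepC.
  rewrite ExZ; ring.
move=> q qs; rewrite ExZ A1 ?mulr0 //.
apply: indepM => //.
move=> t b; exact: (@indep_edge K A Rr E a s q (fun b e => b%:R * e%:R) rd qs t b).
Qed.

Lemma Wh_indep (K : realFieldType) (A Rr : finType) (E : edge_fun A Rr) (w c : A -> Rr -> K)
  (G : {set A * Rr}) (p : K) (a : A) (s : Rr) :
  anchor E G -> r_driven E -> (forall a r, c a r = ((a, r) \in G)%:R) ->
  (a, s) \in G -> indep s (W1_hat p E w c a).
Proof.
move=> ha rd hd hs; apply: indep_sum => q.
case: (eqVneq q s) => [->|qs].
  by move=> t b; rewrite !(ha a s _ hs) hd hs /= subrr !mulr0 !mul0r.
move=> t b.
exact: (@indep_edge K A Rr E a s q (fun b e => b%:R * w a q * (e%:R - c a q) / p + w a q * c a q) rd qs t b).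
Qed.

Lemma ExT (K : realFieldType) (Rr : finType) (p : K) (s : Rr) :
  Ex p (fun t : treat Rr => (t s)%:R) = p.
Proof. by rewrite (Ex_g p s (fun b : bool => b%:R)) /=; ring. Qed.

Lemma ExWh (K : realFieldType) (A Rr : finType) (E : edge_fun A Rr) (w c : A -> Rr -> K)
  (G : {set A * Rr}) (p : K) (a : A) :
  anchor E G -> r_driven E -> (forall a r, c a r = ((a, r) \in G)%:R) -> p != 0 ->
  Ex p (W1_hat p E w c a) = W1 E w a.
Proof.
move=> ha rd hd p0; rewrite /W1_hat Ex_sum /W1; apply: eq_bigr => q _.
case hq: ((a, q) \in G).
  rewrite (@Ex_ext _ _ p _ (fun _ => w a q)); last first.
    by move=> t; rewrite (ha a q t hq) hd hq /= subrr !mulr0 mul0r add0r mulr1.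
  by rewrite Exc (ha a q _ hq) mulr1.
rewrite (@Ex_ext _ _ p _ (fun t => (w a q * (E a q (all1 Rr))%:R / p) * (t q)%:R)); last first.
  move=> t; rewrite hd hq /= subr0 mulr0 addr0.
  have e := @te1 K A Rr E a q t rd.
  rewrite (_ : (t q)%:R * w a q * (E a q t)%:R = w a q * ((t q)%:R * (E a q t)%:R)); last by ring.
  rewrite e; ring.
by rewrite ExZ ExT mulfVK.
Qed.

Lemma ExZu (K : realFieldType) (A Rr : finType) (u : A -> Rr -> K) (p : K) (a : A) :
  Ex p (zu u a) = \sum_(s : Rr) u a s * p.
Proof.
rewrite /zu Ex_sum; apply: eq_bigr => s _.
rewrite (@Ex_ext _ _ p _ (fun t => u a s * (t s)%:R)); last by move=> t; rewrite mulrC.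
by rewrite ExZ ExT.
Qed.

Lemma Zc (K : realFieldType) (A Rr : finType) (u : A -> Rr -> K) (p : K) (a : A) t :
  zu u a t - Ex p (zu u a) = \sum_(s : Rr) u a s * ((t s)%:R - p).
Proof.
rewrite ExZu /zu -sumrB; apply: eq_bigr => s _; ring.
Qed.

Lemma CovE (K : realFieldType) (A Rr : finType) (E : edge_fun A Rr) (w u : A -> Rr -> K)
  (p : K) (a : A) : r_driven E ->
  Cov p (exposure E w a) (zu u a) =
  \sum_(s : Rr) u a s * (p * (1 - p) * (w a s * (E a s (all1 Rr))%:R)).
Proof.
move=> rd; rewrite /Cov.
rewrite (@Ex_ext _ _ p _ (fun t => \sum_(s : Rr) u a s * (((t s)%:R - p) *
   (exposure E w a t * (fun _ => 1) t)) + Ex p (zu u a) * exposure E w a t)); last first.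
  move=> t; rewrite (eq_bigr (fun s => (u a s * ((t s)%:R - p)) * exposure E w a t)); last by move=> s _; ring.
  rewrite -mulr_suml -Zc; ring.
rewrite ExD ExZ Ex_sum.
rewrite (_ : forall x y z : K, x + y * z - z * y = x); last by move=> *; ring.
apply: eq_bigr => s _; rewrite ExZ B // ?Ex1 ?mulr1 //; exact: indepC.
Qed.

Lemma per_a (K : realFieldType) (A Rr : finType)
  (E : edge_fun A Rr) (w : A -> Rr -> K) (alpha beta : A -> K)
  (u c : A -> Rr -> K) (G : {set A * Rr}) (p : K) (a : A) :
  anchor E G -> r_driven E -> p != 0 ->
  (forall a r, u a r != 0 -> (a, r) \in G) ->
  (forall a r, c a r = ((a, r) \in G)%:R) ->
  Cov p (exposure E w a) (zu u a) != 0 ->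
  Ex p (fun t => beta_hat p E w alpha beta u a t * W1_hat p E w c a t) = beta a * W1 E w a.
Proof.
move=> ha rd p0 hc hd C0.
set C := Cov p _ _ in C0 *.
set Wh := W1_hat p E w c a.
set X := exposure E w a.
pose k s := p * (1 - p) * (w a s * (E a s (all1 Rr))%:R).
rewrite (@Ex_ext _ _ p _ (fun t => C^-1 * \sum_(s : Rr) u a s * (((t s)%:R - p) *
   (alpha a * Wh t + beta a * (X t * Wh t))))); last first.
  move=> t; rewrite /beta_hat -/C -/X -/Wh /Y -/X Zc.
  rewrite [in RHS](eq_bigr (fun s => (u a s * ((t s)%:R - p)) * (alpha a * Wh t + beta a * (X t * Wh t)))); last by move=> s _; ring.
  rewrite -mulr_suml; ring.
rewrite ExZ Ex_sum.
rewrite (eq_bigr (fun s => u a s * (beta a * k s * Ex p Wh))); last first.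
  move=> s _; case: (eqVneq (u a s) 0) => [->|us].
    by rewrite !mul0r (@Ex_ext _ _ p _ (fun _ => 0)) ?Exc // => t; rewrite mul0r.
  have hs := hc a s us.
  have hW := @Wh_indep K A Rr E w c G p a s ha rd hd hs.
  rewrite ExZ (@Ex_ext _ _ p _ (fun t => alpha a * (((t s)%:R - p) * Wh t) +
     beta a * (((t s)%:R - p) * (X t * Wh t)))); last by move=> t; ring.
  by rewrite ExD !ExZ A1 // B // /k; ring.
have -> : \sum_(s : Rr) u a s * (beta a * k s * Ex p Wh) = C * (beta a * Ex p Wh).
  rewrite /C CovE // mulr_suml; apply: eq_bigr => s _; rewrite /k; ring.
by rewrite mulKf // (@ExWh K A Rr E w c G p a ha rd hd p0).
Qed.

Theorem theorem1 (K : realFieldType) (A Rr : finType)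
  (E : edge_fun A Rr) (w : A -> Rr -> K) (alpha beta : A -> K)
  (u c : A -> Rr -> K) (G : {set A * Rr}) (p : K) :
  anchor E G ->
  (* (a) *) r_driven E ->
  (* (b) *) 0 < p < 1 ->
  (* (c) *) (forall a r, u a r != 0 -> (a, r) \in G) ->
  (* (d) *) (forall a r, c a r = ((a, r) \in G)%:R) ->
  (* (e) *) (forall a r, (a, r) \in G -> w a r != 0) ->
  (* (f) *) (forall a, (0 < #|[set r | u a r != 0%R]|)%N) ->
  (* well-definedness of beta-hat (nonzero denominator) *)
  (forall a, Cov p (exposure E w a) (zu u a) != 0) ->
  Ex p (mu_hat p E w alpha beta u c) = TTE E w alpha beta.
Proof.
move=> ha rd /andP[p0 p1] hc hd _ _ hC.
have pn0 : p != 0 by rewrite gt_eqF.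
rewrite /mu_hat ExZ Ex_sum /TTE; congr (_ * _); apply: eq_bigr => a _.
rewrite (@per_a K A Rr E w alpha beta u c G p a ha rd pn0 hc hd (hC a)).
have X0 : exposure E w a (all0 Rr) = 0.
  by rewrite /exposure big1 // => r _; rewrite /all0 ffunE !mul0r.
rewrite /Y X0 /exposure /W1; rewrite mulr0 addr0 (addrC (alpha a)) addrK; congr (_ * _).
by apply: eq_bigr => r _; rewrite /all1 ffunE mul1r mulrC.
Qed.
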